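(* Let $\mathcal{A}=\{A_1,\dots,A_l\}$ be a finite family of real $n\times n$ matrices, each with a strictly dominant eigenvalue $\lambda_i$, and let $\tilde r_i,\tilde h_i$, $\tilde R$, $\tilde H$, $\mathcal{K}_{inner}(\mathcal{A})=\{\tilde Rp:p\ge0\}$ and $\mathcal{K}_{outer}(\mathcal{A})=\{r:\tilde Hr\ge0\}$ be as constructed below. Fix $\tau_i>0$ and $w_i>0$ for each $i$, and define $$\tilde A_i:=I+\tau_i(A_i-\lambda_iI),\qquad W_i:=\tilde A_i-w_i\,\tilde r_i\tilde h_i^T.$$ Let $R^{(k)}\in\mathbb{R}^{n\times m}$ be a matrix with no zero column such that every nonzero element of $\mathcal{K}_{inner}(\mathcal{A})$ lies in the interior of $\{R^{(k)}p:p\ge0\}$, and every nonzero element of $\{R^{(k)}p:p\ge0\}$ lies in the interior of $\mathcal{K}_{outer}(\mathcal{A})$. Let $R^{(k+1)}:=[R^{(k)},W_1R^{(k)},\dots,W_lR^{(k)}]\in\mathbb{R}^{n\times (l+1)m}$. Then for each $i$, with $\alpha_i:=1/\tau_i-\lambda_i$, there exists a matrix $P_i\in\mathbb{R}^{(l+1)m\times m}$ with all entries strictly positive such that $$(\alpha_iI+A_i)R^{(k)}=R^{(k+1)}P_i.$$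
   Context: Inequalities are entrywise. A real square matrix $A$ has a strictly dominant eigenvalue if it has a real, algebraically simple eigenvalue $\lambda$ with $\operatorname{Re}\mu<\lambda$ for every other eigenvalue $\mu$. Construction of $\tilde r_i,\tilde h_i$: for each $i$ let $\hat r_i,\hat h_i$ be nonzero right and left eigenvectors of $A_i$ for $\lambda_i$; set $\tilde h_1:=\hat h_1$; for each $k$ choose $\tilde r_k\in\{\hat r_k,-\hat r_k\}$ with $\langle\tilde h_1,\tilde r_k\rangle\ge0$; for $j>1$ choose $\tilde h_j\in\{\hat h_j,-\hat h_j\}$ with $\langle\tilde h_j,\tilde r_j\rangle\ge0$. $\tilde R$ is the $n\times l$ matrix with columns $\tilde r_k$, $\tilde H$ the $l\times n$ matrix with rows $\tilde h_j^T$. *)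

(* Defs.v *)
(* Real matrices are modelled as matrices with real entries
   (Num.real) over an arbitrary numeric algebraically closed field C (e.g. the
   complex numbers); this lets us speak about complex eigenvalues. *)
From HB Require Import structures.
From mathcomp Require Import all_boot all_order all_algebra.
Set Implicit Arguments. Unset Strict Implicit. Unset Printing Implicit Defensive.
Import Order.TTheory GRing.Theory Num.Theory.
Local Open Scope ring_scope.

Section Defs.
Variable C : numClosedFieldType.

Definition real_mx (p q : nat) (M : 'M[C]_(p, q)) : Prop :=
  forall i j, M i j \is Num.real.

Definition nonnegmx (p q : nat) (M : 'M[C]_(p, q)) : Prop :=
  forall i j, 0 <= M i j.

Definition strictly_dominant (n : nat) (A : 'M[C]_n) (lambda : C) : Prop :=
  [/\ lambda \is Num.real,
      root (char_poly A) lambda,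
      mup lambda (char_poly A) = 1%N &
      forall mu, root (char_poly A) mu -> mu != lambda -> 'Re mu < lambda].

Definition cone_gen (n m : nat) (M : 'M[C]_(n, m)) (x : 'cV[C]_n) : Prop :=
  exists p : 'cV[C]_m, nonnegmx p /\ x = M *m p.

Definition cone_outer (l n : nat) (H : 'M[C]_(l, n)) (x : 'cV[C]_n) : Prop :=
  real_mx x /\ nonnegmx (H *m x).

Definition interior_in (n : nat) (S : 'cV[C]_n -> Prop) (x : 'cV[C]_n) : Prop :=
  exists e : C, 0 < e /\
    forall y : 'cV[C]_n, real_mx y -> (forall i, `|y i 0 - x i 0| < e) -> S y.

Definition Rtilde (n l : nat) (rt : 'I_l -> 'cV[C]_n) : 'M[C]_(n, l) :=
  \matrix_(i < n, k < l) rt k i 0.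
Definition Htilde (n l : nat) (ht : 'I_l -> 'rV[C]_n) : 'M[C]_(l, n) :=
  \matrix_(j < l, i < n) ht j 0 i.

End Defs.

(* Main.v *)
Require Import Defs.
From HB Require Import structures.
From mathcomp Require Import all_boot all_order all_algebra.
From mathcomp Require Import ring.
Import Order.TTheory GRing.Theory Num.Theory.
Local Open Scope ring_scope.

Section Helpers.
Variable C : numClosedFieldType.

Lemma rmx_mul p q r (A : 'M[C]_(p,q)) (B : 'M[C]_(q,r)) :
  real_mx A -> real_mx B -> real_mx (A *m B).
Proof. move=> hA hB i j; rewrite mxE; apply: rpred_sum => k _; exact: realM. Qed.
Lemma rmx_add p q (A B : 'M[C]_(p,q)) : real_mx A -> real_mx B -> real_mx (A + B).
Proof. move=> hA hB i j; rewrite mxE; exact: rpredD. Qed.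
Lemma rmx_opp p q (A : 'M[C]_(p,q)) : real_mx A -> real_mx (- A).
Proof. move=> hA i j; rewrite mxE realN; exact: hA. Qed.
Lemma rmx_sub p q (A B : 'M[C]_(p,q)) : real_mx A -> real_mx B -> real_mx (A - B).
Proof. move=> hA hB; apply: rmx_add => //; exact: rmx_opp. Qed.
Lemma rmx_scale p q (a : C) (A : 'M[C]_(p,q)) : a \is Num.real -> real_mx A -> real_mx (a *: A).
Proof. move=> ha hA i j; rewrite mxE; exact: realM. Qed.
Lemma rmx_scalar p (a : C) : a \is Num.real -> real_mx (a%:M : 'M[C]_p).
Proof. move=> ha i j; rewrite mxE; by case: (_ == _); rewrite ?mulr1n ?mulr0n ?real0. Qed.
Lemma rmx_const p q : real_mx (const_mx 1 : 'M[C]_(p,q)).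
Proof. by move=> i j; rewrite mxE. Qed.
Lemma rmx_tr p q (A : 'M[C]_(p,q)) : real_mx A -> real_mx A^T.
Proof. by move=> hA i j; rewrite mxE. Qed.
Lemma rmx_sum p q (I : finType) (F : I -> 'M[C]_(p,q)) :
  (forall i, real_mx (F i)) -> real_mx (\sum_i F i).
Proof. move=> hF i j; rewrite summxE; apply: rpred_sum => k _; exact: hF. Qed.

Lemma small_delta n (e : C) (f : 'I_n -> C) : 0 < e ->
  exists d : C, 0 < d /\ forall k, d * `|f k| < e.
Proof.
move=> e0; set S := \sum_k `|f k|.
have S0 : 0 <= S by apply: sumr_ge0 => k _.
have S1 : 0 < 1 + S by rewrite ltr_wpDr.
exists (e / (1 + S)); split; first by rewrite divr_gt0.
move=> k; have fk : `|f k| <= S by rewrite /S (bigD1 k) //= lerDl sumr_ge0.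
apply: (le_lt_trans (y := e / (1 + S) * S)).
  by rewrite ler_wpM2l // ltW // divr_gt0.
rewrite mulrAC ltr_pdivrMr // ltr_pM2l //.
by rewrite ltrDr ltr01.
Qed.

End Helpers.

Lemma hx_pos (C : numClosedFieldType) n l (H : 'I_l -> 'rV[C]_n) (i : 'I_l) (x : 'cV_n) :
  real_mx (H i) -> H i != 0 -> real_mx x ->
  interior_in (cone_outer (Htilde H)) x -> 0 < (H i *m x) 0 0.
Proof.
move=> hreal hnz xreal [e [e0 he]].
set h := H i.
have hh : 0 < (h *m h^T) 0 0.
  have [k hk] : exists k, h 0 k != 0.
    case/boolP: [exists k, h 0 k != 0] => [/existsP//|].
    rewrite negb_exists => /forallP hall; case/negP: hnz.
    by apply/eqP/matrixP => a b; rewrite ord1 mxE; apply/eqP; rewrite -[_ == _]negbK hall.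
  rewrite mxE (bigD1 k) //=.
  have sq : forall j, h 0 j * h^T j 0 = `|h 0 j| ^+ 2.
    by move=> j; rewrite mxE -expr2 real_normK.
  rewrite sq; apply: ltr_wpDr.
    by apply: sumr_ge0 => j _; rewrite sq exprn_ge0.
  by rewrite exprn_gt0 // normr_gt0.
have [d [d0 hd]] := @small_delta _ _ e (fun k => h 0 k) e0.
have yreal : real_mx (x - d *: h^T).
  by apply: rmx_sub => //; apply: rmx_scale; rewrite ?gtr0_real //; exact: rmx_tr.
have [_ nn] : cone_outer (Htilde H) (x - d *: h^T).
  apply: (he _ yreal) => k; rewrite !mxE addrAC subrr add0r normrN normrM gtr0_norm //; exact: hd.
have := nn i 0.
have -> : (Htilde H *m (x - d *: h^T)) i 0 = (h *m (x - d *: h^T)) 0 0.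
  by rewrite !mxE; apply: eq_bigr => k _; rewrite !mxE.
have -> : (h *m (x - d *: h^T)) 0 0 = (h *m x) 0 0 - d * (h *m h^T) 0 0.
  by rewrite mulmxBr -scalemxAr !mxE.
have sreal : (h *m x) 0 0 \is Num.real by apply: rmx_mul.
move=> nn0; rewrite real_ltNge //; apply/negP => s0.
have : (h *m x) 0 0 - d * (h *m h^T) 0 0 < 0.
  by rewrite subr_lt0 (le_lt_trans s0) // mulr_gt0.
by move/lt_le_trans/(_ nn0); rewrite ltxx.
Qed.

Theorem mainTheorem6 (C : numClosedFieldType) (n l m : nat)
  (A : 'I_l -> 'M[C]_n) (lambda : 'I_l -> C)
  (rt : 'I_l -> 'cV[C]_n) (ht : 'I_l -> 'rV[C]_n)
  (tau w : 'I_l -> C) (Rk : 'M[C]_(n, m)) :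
  (0 < l)%N ->
  (forall i, real_mx (A i)) ->
  (forall i, strictly_dominant (A i) (lambda i)) ->
  (forall i, real_mx (rt i) /\ rt i != 0 /\ A i *m rt i = lambda i *: rt i) ->
  (forall i, real_mx (ht i) /\ ht i != 0 /\ ht i *m A i = lambda i *: ht i) ->
  (forall (i0 k : 'I_l), nat_of_ord i0 = 0%N -> 0 <= (ht i0 *m rt k) 0 0) ->
  (forall j : 'I_l, (0 < nat_of_ord j)%N -> 0 <= (ht j *m rt j) 0 0) ->
  (forall i, 0 < tau i) ->
  (forall i, 0 < w i) ->
  real_mx Rk ->
  (forall j, col j Rk != 0) ->
  (forall x, cone_gen (Rtilde rt) x -> x != 0 -> interior_in (cone_gen Rk) x) ->
  (forall x, cone_gen Rk x -> x != 0 -> interior_in (cone_outer (Htilde ht)) x) ->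
  let W := fun i : 'I_l =>
    (1%:M + tau i *: (A i - (lambda i)%:M)) - w i *: (rt i *m ht i) in
  let Rnext := row_mx Rk (\mxrow_(i < l) (W i *m Rk)) in
  forall i : 'I_l,
    exists P : 'M[C]_(m + \sum_(j < l) m, m),
      (forall a b, 0 < P a b) /\
      ((tau i)^-1 - lambda i)%:M *m Rk + A i *m Rk = Rnext *m P.
Proof.
move=> l0 Areal Hdom Hr Hh _ _ tau0 w0 Rreal Rcol Hin Hout W Rnext i.
have lamreal : forall j, lambda j \is Num.real by move=> j; case: (Hdom j).
have rtreal : forall j, real_mx (rt j) by move=> j; case: (Hr j).
have htreal : forall j, real_mx (ht j) by move=> j; case: (Hh j).
have Wreal : forall j, real_mx (W j).
  move=> j; apply: rmx_sub; first apply: rmx_add.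
  - exact: rmx_scalar.
  - apply: rmx_scale; first exact: gtr0_real.
    by apply: rmx_sub; [exact: Areal | exact: rmx_scalar].
  - apply: rmx_scale; first exact: gtr0_real.
    exact: rmx_mul.
have delta_real : forall p (b : 'I_p), real_mx (delta_mx b 0 : 'cV[C]_p).
  by move=> p b a c; rewrite mxE realn.
have delta_nn : forall p (b : 'I_p), nonnegmx (delta_mx b 0 : 'cV[C]_p).
  by move=> p b a c; rewrite mxE ler0n.
set t := tau i; set ww := w i; set lam := lambda i; set r := rt i; set h := ht i.
have ww0 : 0 < ww := w0 i. have t0 : 0 < t := tau0 i.
have [_ [rnz rA]] := Hr i. have [_ [hnz hA]] := Hh i.
set s := h *m Rk.
have spos : forall b, 0 < s 0 b.
  move=> b.
  have -> : s 0 b = (h *m col b Rk) 0 0 by rewrite !mxE; apply: eq_bigr => k _; rewrite !mxE.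
  apply: hx_pos => //.
    by rewrite colE; apply: rmx_mul.
  apply: Hout (Rcol b); exists (delta_mx b 0); split => //; exact: colE.
have [e [e0 he]] : interior_in (cone_gen Rk) r.
  apply: Hin rnz; exists (delta_mx i 0); split => //.
  by rewrite -colE; apply/matrixP => a c; rewrite ord1 !mxE.
set one := (const_mx 1 : 'cV[C]_m).
set v := \sum_j (W j *m Rk *m one).
set u := Rk *m one.
have [d [d0 hd]] := @small_delta _ _ e (fun k => v k 0 + u k 0) e0.
have [p [p0 pE]] : cone_gen Rk (r - d *: (v + u)).
  apply: he.
    apply: rmx_sub; first exact: rtreal.
    apply: rmx_scale; first exact: gtr0_real.
    apply: rmx_add; first apply: rmx_sum => j.
      by apply: rmx_mul; [apply: rmx_mul|exact: rmx_const].
    by apply: rmx_mul => //; exact: rmx_const.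
  move=> k.
  have -> : (r - d *: (v + u)) k 0 - r k 0 = - (d * (v k 0 + u k 0)) by rewrite !mxE addrAC subrr add0r.
  by rewrite normrN normrM gtr0_norm //; exact: hd.
set q := p + d *: one.
have Rq : Rk *m q = r - d *: v.
  by rewrite mulmxDr -pE -scalemxAr -/u scalerDr opprD addrA subrK.
pose X := (ww / t) *: (q *m s).
pose Y := fun j : 'I_l => (ww * d / t) *: (one *m s) + (if j == i then t^-1 else 0)%:M.
exists (col_mx X (\mxcol_j Y j)); split.
  move=> a b; rewrite -(splitK a); case: (split a) => a' /=.
    rewrite col_mxEu /X mxE (mxE _ _ a') big_ord1.
    have qpos : 0 < q a' 0 by rewrite !mxE mulr1 ltr_wpDl.
    by rewrite !mulr_gt0 ?invr_gt0 ?qpos ?spos.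
  rewrite col_mxEd mxE /Y mxE.
  have os : forall x c, (one *m s) x c = s 0 c by move=> x c; rewrite mxE big_ord1 mxE mul1r.
  apply: ltr_wpDr.
    rewrite mxE mulrn_wge0 //; case: (_ == _) => //.
    by rewrite invr_ge0 ltW.
  by rewrite mxE os !mulr_gt0 ?invr_gt0 ?spos.
rewrite /Rnext mul_row_col mul_mxrow_mxcol.
have sumY : \sum_j W j *m Rk *m Y j = (ww * d / t) *: (v *m s) + t^-1 *: (W i *m Rk).
  rewrite /Y; under eq_bigr do rewrite mulmxDr scalemxAr mul_mx_scalar mulmxA.
  rewrite big_split /= -mulmx_suml -/v; congr (_ + _); first by rewrite !scalemxAr.
  by rewrite (bigD1 i) //= eqxx big1 ?addr0 // => j /negbTE ->; rewrite scale0r.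
rewrite sumY /X -scalemxAr mulmxA Rq mulmxBl -scalemxAl.
rewrite /W mulmxBl mulmxDl mul1mx -scalemxAl mulmxBl mul_scalar_mx -scalemxAl -mulmxA -/s.
rewrite mul_scalar_mx -/r -/lam -/t -/ww.
move: (A i *m Rk) (r *m s) (v *m s) => AR rs vs.
apply/matrixP => a b; rewrite !mxE.
have tn0 : t != 0 by rewrite gt_eqF.
by field.
Qed.
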